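(* Every irreducible $\lambda$-quiddity over the ring $(\mathbb{Z}/2\mathbb{Z})\times(\mathbb{Z}/4\mathbb{Z})$ has size $3$, $4$ or $6$.
   Context: For $a_1,\ldots,a_n$ in a commutative unital ring $A$, $M_n(a_1,\ldots,a_n)=\begin{pmatrix}a_n&-1\\1&0\end{pmatrix}\cdots\begin{pmatrix}a_1&-1\\1&0\end{pmatrix}$. An $n$-tuple $(a_1,\ldots,a_n)\in A^n$ is a $\lambda$-quiddity over $A$ of size $n$ if $M_n(a_1,\ldots,a_n)=\pm\mathrm{Id}$. For $(a_1,\ldots,a_n)\in A^n$, $(b_1,\ldots,b_m)\in A^m$, define $(a_1,\ldots,a_n)\oplus(b_1,\ldots,b_m)=(a_1+b_m,a_2,\ldots,a_{n-1},a_n+b_1,b_2,\ldots,b_{m-1})$. Write $(a_1,\ldots,a_n)\sim(b_1,\ldots,b_n)$ if $(b_1,\ldots,b_n)$ is obtained from $(a_1,\ldots,a_n)$ or from $(a_n,\ldots,a_1)$ by a cyclic permutation. A $\lambda$-quiddity $(c_1,\ldots,c_n)$ with $n\ge3$ is reducible if there exist a $\lambda$-quiddity $(b_1,\ldots,b_l)$ and a tuple $(a_1,\ldots,a_m)$ with $l,m\ge3$ and $(c_1,\ldots,c_n)\sim(a_1,\ldots,a_m)\oplus(b_1,\ldots,b_l)$; it is irreducible otherwise (by convention $(0,0)$ is reducible). *)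

(* Defs.v *)
From HB Require Import structures.
From mathcomp Require Import all_boot all_order all_algebra.
Set Implicit Arguments. Unset Strict Implicit. Unset Printing Implicit Defensive.
Import Order.TTheory GRing.Theory Num.Theory.
Local Open Scope ring_scope.

Definition Z2Z4 : comNzRingType := ('Z_2 * 'Z_4)%type.

Section Quiddity.
Variable A : comNzRingType.

Definition qmat (a : A) : 'M[A]_2 :=
  \matrix_(i < 2, j < 2)
    (if i == 0 :> nat then (if j == 0 :> nat then a else -1)
     else (if j == 0 :> nat then 1 else 0)).

(* M_n(a_1,...,a_n) = qmat a_n * ... * qmat a_1 ; for s = [:: a_1; ...; a_n]. *)
Definition Mq (s : seq A) : 'M[A]_2 :=
  foldl (fun M a => qmat a *m M) 1%:M s.

Definition lambda_quiddity (s : seq A) : Prop :=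
  Mq s = 1%:M \/ Mq s = - 1%:M.

(* (a_1,...,a_n) (+) (b_1,...,b_m)
   = (a_1+b_m, a_2, ..., a_{n-1}, a_n+b_1, b_2, ..., b_{m-1}) *)
Definition qsum (a b : seq A) : seq A :=
  let n := size a in let m := size b in
  [:: nth 0 a 0 + nth 0 b m.-1]
  ++ take (n - 2) (drop 1 a)
  ++ [:: nth 0 a n.-1 + nth 0 b 0]
  ++ take (m - 2) (drop 1 b).

Definition qequiv (c d : seq A) : Prop :=
  exists k : nat, d = rot k c \/ d = rot k (rev c).

Definition reducible (c : seq A) : Prop :=
  c = [:: 0; 0] \/
  (3 <= size c)%N /\
  exists a b : seq A, [/\ lambda_quiddity b, (3 <= size b)%N, (3 <= size a)%N
                       & qequiv c (qsum a b)].

(* Irreducible lambda-quiddity: a lambda-quiddity of size n >= 3 which is not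
   reducible (the only size-2 lambda-quiddity is (0,0), reducible by convention). *)
Definition irreducible_quiddity (c : seq A) : Prop :=
  [/\ lambda_quiddity c, (3 <= size c)%N & ~ reducible c].

End Quiddity.

(* Main.v *)
Require Import Defs.
From mathcomp Require Import all_boot all_order all_algebra.
From mathcomp Require Import ring.
Import GRing.Theory.
Local Open Scope ring_scope.

Section Gen.
Variable A : comNzRingType.

Lemma qmat_mulE (x : A) (M : 'M[A]_2) i j :
  (qmat x *m M) i j = if i == 0 then x * M 0 j - M 1 j else M 0 j.
Proof.
rewrite mxE big_ord_recr big_ord_recr big_ord0 /= add0r.
have -> : widen_ord (leqnSn 1) ord_max = 0 :> 'I_2 by apply: val_inj.
have -> : ord_max = 1 :> 'I_2 by apply: val_inj.
rewrite !mxE /=.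
case: i => [[|[|i]] Hi] //=.
  by rewrite mulNr mul1r.
by rewrite mul1r mul0r addr0.
Qed.

Lemma mul_qmatE (x : A) (M : 'M[A]_2) i j :
  (M *m qmat x) i j = if j == 0 then M i 0 * x + M i 1 else - M i 0.
Proof.
rewrite mxE big_ord_recr big_ord_recr big_ord0 /= add0r.
have -> : widen_ord (leqnSn 1) ord_max = 0 :> 'I_2 by apply: val_inj.
have -> : ord_max = 1 :> 'I_2 by apply: val_inj.
rewrite !mxE /=.
case: j => [[|[|j]] Hj] //=.
  by rewrite mulr1.
by rewrite mulrN1 mulr0 addr0.
Qed.

Lemma Mq_rcons (s : seq A) x : Mq (rcons s x) = qmat x *m Mq s.
Proof. by rewrite /Mq foldl_rcons. Qed.

Lemma foldl_mul (s : seq A) (M N : 'M[A]_2) :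
  foldl (fun M a => qmat a *m M) (M *m N) s = foldl (fun M a => qmat a *m M) M s *m N.
Proof. elim: s M => [|a s IH] M //=. by rewrite -IH mulmxA. Qed.

Lemma Mq_cons (s : seq A) x : Mq (x :: s) = Mq s *m qmat x.
Proof. by rewrite /Mq /= mulmx1 -{1}(mul1mx (qmat x)) foldl_mul. Qed.

Definition colA (s : seq A) : A * A :=
  foldl (fun p x => (x * p.1 - p.2, p.1)) (1, 0) s.

Lemma colAE s : colA s = (Mq s 0 0, Mq s 1 0).
Proof.
elim/last_ind: s => [|s x IH].
  by rewrite /colA /Mq /= !mxE.
by rewrite /colA foldl_rcons -/(colA s) IH Mq_rcons !qmat_mulE.
Qed.

Lemma Mq_det (s : seq A) : Mq s 0 0 * Mq s 1 1 - Mq s 0 1 * Mq s 1 0 = 1.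
Proof.
elim/last_ind: s => [|s x IH].
  by rewrite /Mq /= !mxE /= mulr1 mulr0 subr0.
rewrite Mq_rcons !qmat_mulE /=. rewrite -IH. ring.
Qed.

Lemma complete (w : seq A) (e : A) : e * e = 1 -> Mq w 0 0 = - e ->
  exists u v, Mq (u :: rcons w v) = e%:M.
Proof.
move=> ee Hp.
exists (e * Mq w 0 1), (- e * Mq w 1 0).
have Hd := Mq_det w.
rewrite Mq_cons Mq_rcons.
apply/matrixP => i j.
rewrite !mul_qmatE !qmat_mulE !mxE /=.
set p := Mq w 0 0 in Hp Hd *; set q := Mq w 0 1 in Hd *;
set r := Mq w 1 0 in Hd *; set s := Mq w 1 1 in Hd *.
rewrite Hp in Hd.
have Hes : e * s = -1 - q * r by rewrite -Hd; ring.
have Hs : s = - e - e * q * r.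
  by rewrite -[s]mul1r -ee -mulrA Hes; ring.
have E0 : e * e - 1 = 0 by rewrite ee subrr.
case: i => [[|[|i]] Hi] //=; case: j => [[|[|j]] Hj] //=; rewrite Hp ?Hs ?mulr1n ?mulr0n.
- apply/eqP; rewrite -subr_eq0; apply/eqP.
  transitivity ((e * e - 1) * (r * e * q)); first ring.
  by rewrite E0 mul0r.
- transitivity (- (e * e - 1) * r); first ring.
  by rewrite E0 oppr0 mul0r.
- transitivity (- (e * e - 1) * q); first ring.
  by rewrite E0 oppr0 mul0r.
- by rewrite opprK.
Qed.

Lemma qsumE (p q u v : A) (mid w : seq A) :
  qsum (p :: rcons mid q) (u :: rcons w v) = (p + v) :: mid ++ (q + u) :: w.
Proof.
rewrite /qsum /= !size_rcons /=.
rewrite !nth_rcons !ltnn !eqxx /= !drop0.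
have Ht : forall (s : seq A) x, take (size s) (rcons s x) = s.
  by move=> s x; rewrite -cats1 take_size_cat.
have -> : ((size mid).+2 - 2)%N = size mid by rewrite subn2.
have -> : ((size w).+2 - 2)%N = size w by rewrite subn2.
by rewrite !Ht.
Qed.

Lemma red_rot (c : seq A) j d w :
  rot j c = d ++ w -> (3 <= size d)%N -> (0 < size w)%N ->
  (Mq w 0 0 = 1 \/ Mq w 0 0 = -1) -> reducible c.
Proof.
move=> Hr Hd Hw Hu.
right; split.
  by rewrite -(size_rot j) Hr size_cat; apply: leq_trans Hd (leq_addr _ _).
have [e ee He] : exists2 e : A, e * e = 1 & Mq w 0 0 = - e.
  case: Hu => ->; [exists (-1); [by rewrite mulrNN mulr1 | by rewrite opprK]
                  | exists 1; [by rewrite mulr1 | by []]].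
have [u [v Huv]] := @complete w e ee He.
case: d Hr Hd => [|p d] // Hr Hd.
case/lastP: d Hr Hd => [|mid q] // Hr Hd.
exists ((p - v) :: rcons mid (q - u)), (u :: rcons w v); split.
- have : e = 1 \/ e = -1.
    by case: Hu => H; rewrite He in H; [right|left]; rewrite -[e]opprK H ?opprK.
  case=> Ee; rewrite /lambda_quiddity Huv Ee; [by left | right].
  by apply/matrixP => i k; rewrite !mxE; case: (i == k); rewrite ?mulr1n ?mulr0n ?oppr0.
- by rewrite /= size_rcons; case: w Hw {Hr Huv He Hu}.
- by move: Hd; rewrite /= !size_rcons.
- exists j; left. rewrite Hr qsumE !subrK /=.
  by rewrite cat_rcons.
Qed.
End Gen.
Arguments colA {A}.

From mathcomp Require Import zify.

Definition cont (s : seq Z2Z4) := (colA s).1.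
Definition isu (x : Z2Z4) := (x == 1) || (x == -1).
Definition elems : seq Z2Z4 :=
  [seq ((inZp i : 'Z_2), (inZp j : 'Z_4)) | i <- iota 0 2, j <- iota 0 4].

Lemma elemsP x : x \in elems.
Proof.
case: x => [[a Ha] [b Hb]].
by case: a Ha => [|[|a]] Ha //; case: b Hb => [|[|[|[|b]]]] Hb.
Qed.

Lemma isuP w : isu (cont w) -> Mq w 0 0 = 1 \/ Mq w 0 0 = -1.
Proof. by rewrite /isu /cont colAE /= => /orP [] /eqP ->; [left|right]. Qed.

Definition w4 (x1 x2 x3 x4 : Z2Z4) :=
  [|| isu (cont [:: x1]), isu (cont [:: x2]), isu (cont [:: x3]), isu (cont [:: x4]),
      isu (cont [:: x1; x2]), isu (cont [:: x2; x3]),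
      isu (cont [:: x3; x4]), isu (cont [:: x1; x2; x3]), isu (cont [:: x2; x3; x4]) |
      isu (cont [:: x1; x2; x3; x4])].

Lemma fact4 : all (fun x1 => all (fun x2 => all (fun x3 => all (fun x4 =>
  w4 x1 x2 x3 x4) elems) elems) elems) elems.
Proof. vm_compute. reflexivity. Qed.

Lemma fact4' x1 x2 x3 x4 : w4 x1 x2 x3 x4.
Proof.
move/allP: fact4 => /(_ x1 (elemsP _)) /allP /(_ x2 (elemsP _)) /allP
  /(_ x3 (elemsP _)) /allP /(_ x4 (elemsP _)); exact.
Qed.

Definition w5 (x1 x2 x3 x4 x5 : Z2Z4) :=
  [|| isu (cont [:: x1]), isu (cont [:: x2]), isu (cont [:: x3]), isu (cont [:: x4]),
      isu (cont [:: x5]),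
      isu (cont [:: x1; x2]), isu (cont [:: x2; x3]),
      isu (cont [:: x3; x4]), isu (cont [:: x4; x5]) |
      isu (cont [:: x5; x1])].

Definition qc (s : seq Z2Z4) := (colA s == (1, 0)) || (colA s == (-1, 0)).

Lemma fact5 : all (fun x1 => all (fun x2 => all (fun x3 => all (fun x4 => all (fun x5 =>
  qc [:: x1; x2; x3; x4; x5] ==> w5 x1 x2 x3 x4 x5) elems) elems) elems) elems) elems.
Proof. vm_compute. reflexivity. Qed.

Lemma fact5' x1 x2 x3 x4 x5 : qc [:: x1; x2; x3; x4; x5] -> w5 x1 x2 x3 x4 x5.
Proof.
move/allP: fact5 => /(_ x1 (elemsP _)) /allP /(_ x2 (elemsP _)) /allP
  /(_ x3 (elemsP _)) /allP /(_ x4 (elemsP _)) /allP /(_ x5 (elemsP _)) /implyP; exact.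
Qed.

Lemma quid_qc (c : seq Z2Z4) : lambda_quiddity c -> qc c.
Proof.
rewrite /qc colAE /lambda_quiddity => -[] ->; rewrite !mxE /=.
  by [].
by rewrite oppr0 eqxx ?orbT.
Qed.

Local Close Scope ring_scope.
Theorem proposition4p3 (c : seq Z2Z4) :
  irreducible_quiddity c -> size c \in [:: 3; 4; 6].
Proof.
case=> Hq Hs Hn.
case: c Hs Hq Hn => [|x1 [|x2 [|x3 [|x4 r]]]] // _ Hq Hn.
case: r Hq Hn => [|x5 [|x6 [|x7 r]]] // Hq Hn.
- exfalso; have := @fact5' _ _ _ _ _ (quid_qc _ Hq); rewrite /w5.
  case/orP=> [H|].
    apply: Hn; move/isuP: H; apply: (@red_rot _ _ 1 [:: x2; x3; x4; x5] [:: x1]) => //.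
  case/orP=> [H|].
    apply: Hn; move/isuP: H; apply: (@red_rot _ _ 2 [:: x3; x4; x5; x1] [:: x2]) => //.
  case/orP=> [H|].
    apply: Hn; move/isuP: H; apply: (@red_rot _ _ 3 [:: x4; x5; x1; x2] [:: x3]) => //.
  case/orP=> [H|].
    apply: Hn; move/isuP: H; apply: (@red_rot _ _ 4 [:: x5; x1; x2; x3] [:: x4]) => //.
  case/orP=> [H|].
    apply: Hn; move/isuP: H; apply: (@red_rot _ _ 5 [:: x1; x2; x3; x4] [:: x5]) => //.
  case/orP=> [H|].
    apply: Hn; move/isuP: H; apply: (@red_rot _ _ 2 [:: x3; x4; x5] [:: x1; x2]) => //.
  case/orP=> [H|].
    apply: Hn; move/isuP: H; apply: (@red_rot _ _ 3 [:: x4; x5; x1] [:: x2; x3]) => //.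
  case/orP=> [H|].
    apply: Hn; move/isuP: H; apply: (@red_rot _ _ 4 [:: x5; x1; x2] [:: x3; x4]) => //.
  case/orP=> [H|].
    apply: Hn; move/isuP: H; apply: (@red_rot _ _ 5 [:: x1; x2; x3] [:: x4; x5]) => //.
  move=> H.
    apply: Hn; move/isuP: H; apply: (@red_rot _ _ 1 [:: x2; x3; x4] [:: x5; x1]) => //.
- exfalso; have := fact4' x1 x2 x3 x4; rewrite /w4.
  set R := [:: x5, x6, x7 & r].
  have HR : (3 <= size R)%N by rewrite /R /=.
  case/orP=> [H|].
    apply: Hn; move/isuP: H; apply: (@red_rot _ _ 1 [:: x2, x3, x4 & R] [:: x1]); by rewrite /rot /= -?catA ?size_cat /=; try lia.
  case/orP=> [H|].
    apply: Hn; move/isuP: H; apply: (@red_rot _ _ 2 ([:: x3, x4 & R] ++ [:: x1]) [:: x2]); by rewrite /rot /= -?catA ?size_cat /=; try lia.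
  case/orP=> [H|].
    apply: Hn; move/isuP: H; apply: (@red_rot _ _ 3 ([:: x4 & R] ++ [:: x1; x2]) [:: x3]); by rewrite /rot /= -?catA ?size_cat /=; try lia.
  case/orP=> [H|].
    apply: Hn; move/isuP: H; apply: (@red_rot _ _ 4 (R ++ [:: x1; x2; x3]) [:: x4]); by rewrite /rot /= -?catA ?size_cat /=; try lia.
  case/orP=> [H|].
    apply: Hn; move/isuP: H; apply: (@red_rot _ _ 2 [:: x3, x4 & R] [:: x1; x2]); by rewrite /rot /= -?catA ?size_cat /=; try lia.
  case/orP=> [H|].
    apply: Hn; move/isuP: H; apply: (@red_rot _ _ 3 ([:: x4 & R] ++ [:: x1]) [:: x2; x3]); by rewrite /rot /= -?catA ?size_cat /=; try lia.
  case/orP=> [H|].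
    apply: Hn; move/isuP: H; apply: (@red_rot _ _ 4 (R ++ [:: x1; x2]) [:: x3; x4]); by rewrite /rot /= -?catA ?size_cat /=; try lia.
  case/orP=> [H|].
    apply: Hn; move/isuP: H; apply: (@red_rot _ _ 3 [:: x4 & R] [:: x1; x2; x3]); by rewrite /rot /= -?catA ?size_cat /=; try lia.
  case/orP=> [H|].
    apply: Hn; move/isuP: H; apply: (@red_rot _ _ 4 (R ++ [:: x1]) [:: x2; x3; x4]); by rewrite /rot /= -?catA ?size_cat /=; try lia.
  move=> H.
    apply: Hn; move/isuP: H; apply: (@red_rot _ _ 4 R [:: x1; x2; x3; x4]); by rewrite /rot /= -?catA ?size_cat /=; try lia.
Qed.
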